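(* Let $\mathcal{G}$ be a groupoid, $\mathbb{K}$ a field, and $\sigma :\mathcal{G} \times\mathcal{G} \to \mathbb{K}$ a map taking only the values $0$ and $1$, with $\sigma(e,e) = 1$ for all $e \in \mathcal{G}_0$, and such that for all $(x,y) \in \mathrm{dom}\,\sigma$, $$(xy,y^{-1}),\ (y^{-1},x^{-1}),\ (x,d(x)) \in \mathrm{dom}\,\sigma.$$ Let $(a,b),(c,f) \in \mathcal{G}^2$ be such that $\sigma(a,b) = 0$ and $\{ a^{-1}, b \} \subseteq \{ d(c), c^{-1}, f \}$. Then $\sigma(c,f) = 0$.
   Context: A groupoid is a nonempty set $\mathcal{G}$ with a partial associative product, each $g$ having right identity $d(g)=g^{-1}g$, left identity $r(g)=gg^{-1}$ and inverse $g^{-1}$; $xy$ is defined iff $d(x)=r(y)$; $\mathcal{G}_0$ is the set of identities and $\mathcal{G}^2$ the set of composable pairs. For such $\sigma$, $\mathrm{dom}\,\sigma=\{(x,y)\in\mathcal{G}\times\mathcal{G}:\sigma(x,y)\neq0\}$. *)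

(* Defs.v *)
From mathcomp Require Import all_boot all_algebra.
Set Implicit Arguments. Unset Strict Implicit. Unset Printing Implicit Defensive.

(* A groupoid: a nonempty set with a partial associative product, given here
   as a total function [gmul] that is only meaningful on composable pairs,
   and an inverse.  d g = g^-1 g, r g = g g^-1, and x y is defined iff
   d x = r y. *)
Record groupoid := Groupoid {
  gcarrier :> Type;
  gmul : gcarrier -> gcarrier -> gcarrier;
  ginv : gcarrier -> gcarrier;
  g_nonempty : inhabited gcarrier;
  ginvK : forall x, ginv (ginv x) = x;
  gd_mul : forall x y, gmul (ginv x) x = gmul y (ginv y) ->
             gmul (ginv (gmul x y)) (gmul x y) = gmul (ginv y) y;
  gr_mul : forall x y, gmul (ginv x) x = gmul y (ginv y) ->
             gmul (gmul x y) (ginv (gmul x y)) = gmul x (ginv x);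
  gmulA : forall x y z, gmul (ginv x) x = gmul y (ginv y) ->
            gmul (ginv y) y = gmul z (ginv z) ->
            gmul (gmul x y) z = gmul x (gmul y z);
  gmul_d : forall x, gmul x (gmul (ginv x) x) = x;
  gr_mul_l : forall x, gmul (gmul x (ginv x)) x = x
}.

Section GroupoidDefs.
Variable G : groupoid.
Definition gd (g : G) : G := gmul (ginv g) g.
Definition gr (g : G) : G := gmul g (ginv g).
Definition composable (x y : G) : Prop := gd x = gr y.
Definition is_identity (e : G) : Prop := exists g : G, e = gd g.
End GroupoidDefs.

(* Main.v *)
Require Import Defs.
From mathcomp Require Import all_boot all_algebra.
Import GRing.Theory.
Local Open Scope ring_scope.
Set Implicit Arguments. Unset Strict Implicit.

Lemma ide_d (G : groupoid) (x : G) : gd (gd x) = gd x.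
Proof.
have := @gd_mul G (ginv x) x; rewrite ginvK => H; exact: H.
Qed.

Lemma ide_r (G : groupoid) (x : G) : gr (gd x) = gd x.
Proof.
have := @gr_mul G (ginv x) x; rewrite ginvK => H; exact: H.
Qed.

Lemma ide_inv (G : groupoid) (x : G) : ginv (gd x) = gd x.
Proof.
have := @gr_mul_l G (ginv (gd x)); rewrite ginvK.
change (gmul (ginv (gd x)) (gd x)) with (gd (gd x)).
rewrite ide_d => H; rewrite -{}H; exact: ide_r.
Qed.

Lemma gd_inv (G : groupoid) (x : G) : gd (ginv x) = gr x.
Proof. by rewrite /gd /gr ginvK. Qed.

Lemma gr_inv (G : groupoid) (x : G) : gr (ginv x) = gd x.
Proof. by rewrite /gd /gr ginvK. Qed.

Lemma idr_d (G : groupoid) (x : G) : gd (gr x) = gr x.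
Proof. rewrite -(gd_inv x); exact: ide_d. Qed.
Lemma idr_r (G : groupoid) (x : G) : gr (gr x) = gr x.
Proof. rewrite -(gd_inv x); exact: ide_r. Qed.
Lemma idr_inv (G : groupoid) (x : G) : ginv (gr x) = gr x.
Proof. rewrite -(gd_inv x); exact: ide_inv. Qed.

Lemma comp_d (G : groupoid) (x : G) : composable x (gd x).
Proof. by rewrite /composable ide_r. Qed.

Lemma dmul_inv (G : groupoid) (x : G) : gmul (gd x) (ginv x) = ginv x.
Proof. have := @gr_mul_l G (ginv x); rewrite ginvK; exact. Qed.

Lemma rmul (G : groupoid) (x : G) : gmul (gr x) x = x.
Proof. exact: gr_mul_l. Qed.

Lemma Lchain (G : groupoid) (K : fieldType) (sigma : G -> G -> K)
  (Hdom : forall x y : G, composable x y -> sigma x y != 0 ->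
     [/\ sigma (gmul x y) (ginv y) != 0,
         sigma (ginv y) (ginv x) != 0 &
         sigma x (gd x) != 0]) (x : G) :
  sigma x (gd x) != 0 -> sigma x (ginv x) != 0.
Proof.
move=> H.
have [_ h2 _] := Hdom _ _ (comp_d x) H.
rewrite ide_inv in h2.
have c2 : composable (gd x) (ginv x) by rewrite /composable ide_d gr_inv.
have [h3 _ _] := Hdom _ _ c2 h2.
rewrite dmul_inv ginvK in h3.
have c3 : composable (ginv x) x by rewrite /composable gd_inv.
have [_ _ h4] := Hdom _ _ c3 h3.
rewrite gd_inv in h4.
have c4 : composable (ginv x) (gr x) by rewrite /composable gd_inv idr_r.
have [_ h5 _] := Hdom _ _ c4 h4.
rewrite idr_inv ginvK in h5.
have c5 : composable (gr x) x by rewrite /composable idr_d.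
have [h6 _ _] := Hdom _ _ c5 h5.
by rewrite rmul in h6.
Qed.

Theorem mainTheorem10 (G : groupoid) (K : fieldType) (sigma : G -> G -> K)
  (Hval : forall x y : G, sigma x y = 0 \/ sigma x y = 1)
  (Hid : forall e : G, is_identity e -> sigma e e = 1)
  (Hdom : forall x y : G, composable x y -> sigma x y != 0 ->
     [/\ sigma (gmul x y) (ginv y) != 0,
         sigma (ginv y) (ginv x) != 0 &
         sigma x (gd x) != 0])
  (a b c f : G) (Hab : composable a b) (Hcf : composable c f)
  (Hs : sigma a b = 0)
  (Hsub : forall z : G, z = ginv a \/ z = b -> [\/ z = gd c, z = ginv c | z = f]) :
  sigma c f = 0.
Proof.
case: (eqVneq (sigma c f) 0) => // Hcf0.
exfalso; move: Hs; apply/eqP.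
have [_ h2 h3] := Hdom _ _ Hcf Hcf0.
have h5 := Lchain Hdom h3.
have [_ h6 _] := Hdom _ _ (comp_d c) h3.
rewrite ide_inv in h6.
have c7 : composable (ginv f) (ginv c).
  by rewrite /composable gd_inv gr_inv.
have [_ _ h7] := Hdom _ _ c7 h2.
have h8 := Lchain Hdom h7.
rewrite ginvK in h8.
have [_ h9 _] := Hdom _ _ (comp_d _) h7.
rewrite ide_inv ginvK in h9.
rewrite gd_inv -Hcf in h7 h9.
have hid : sigma (gd c) (gd c) != 0.
  by rewrite Hid ?oner_neq0 //; exists c.
have Ha := Hsub (ginv a) (or_introl erefl).
have Hb := Hsub b (or_intror erefl).
have Ea : forall z, ginv a = z -> a = ginv z by move=> z E; rewrite -(ginvK a) E.
case: Ha => /Ea ->; case: Hb => ->; rewrite ?ide_inv ?ginvK //.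
Qed.
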